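(* Let $\mathcal L$ be a finite atomic lattice. Identify each $x\in\bar{\mathcal L}$ with the simplex $\{a\in\mathcal A(\mathcal L): a\le x\}$ of $\Gamma(\mathcal L)$; this identifies $\bar{\mathcal L}$ with a subposet of $\mathcal F(\Gamma(\mathcal L))$ and hence $\Delta(\bar{\mathcal L})$ with a subcomplex of ${\rm Bd}(\Gamma(\mathcal L))$. Then ${\rm Bd}(\Gamma(\mathcal L))$ collapses onto $\Delta(\bar{\mathcal L})$. Consequently $\Gamma(\mathcal L)$ and $\Delta(\bar{\mathcal L})$ have the same simple homotopy type.
   Context: For a finite lattice $\mathcal L$ with minimum $\hat0$ and maximum $\hat1$, $\bar{\mathcal L}=\mathcal L\setminus\{\hat0,\hat1\}$, and $\mathcal A(\mathcal L)$ is the set of atoms (elements covering $\hat0$). $\mathcal L$ is atomic if every element is a join of atoms. The atom crosscut complex $\Gamma(\mathcal L)$ is the simplicial complex with vertex set $\mathcal A(\mathcal L)$ whose simplices are the nonempty subsets $\sigma\subseteq\mathcal A(\mathcal L)$ with $\bigvee\sigma\neq\hat1$. $\mathcal F(X)$ is the face poset, ${\rm Bd}(X)=\Delta(\mathcal F(X))$ the barycentric subdivision, $\Delta(Q)$ the order complex (simplices = nonempty chains). Same simple homotopy type means connected by a finite sequence of elementary collapses and expansions. *)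

(* Defs.v *)
From Stdlib Require Import Relations.
From HB Require Import structures.
From mathcomp Require Import all_boot all_order.
Set Implicit Arguments. Unset Strict Implicit. Unset Printing Implicit Defensive.
Import Order.TTheory.
Local Open Scope order_scope.

Definition is_complex (V : finType) (K : {set {set V}}) : bool :=
  [forall s in K, (s != set0) &&
     [forall t : {set V}, ((t != set0) && (t \subset s)) ==> (t \in K)]].

Definition elementary_collapse (V : finType) (K K' : {set {set V}}) : Prop :=
  is_complex K /\
  exists s t : {set V},
    [/\ s \in K, t \in K, s \proper t & #|t| = #|s|.+1] /\
    (forall u, u \in K -> s \proper u -> u = t) /\
    K' = K :\ s :\ t.

Definition collapses (V : finType) (K K' : {set {set V}}) : Prop :=
  clos_refl_trans _ (@elementary_collapse V) K K'.

Definition cx_image (V W : finType) (f : V -> W) (K : {set {set V}})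
  : {set {set W}} := [set f @: (s : {set V}) | s in K].

(** Same simple homotopy type: the complexes (relabelled injectively into a
    common finite vertex type, so that new vertices created by expansions
    are available) are connected by a finite sequence of elementary
    collapses and elementary expansions (inverse collapses). *)
Definition same_simple_homotopy_type (V1 V2 : finType)
  (K1 : {set {set V1}}) (K2 : {set {set V2}}) : Prop :=
  exists (W : finType) (f1 : V1 -> W) (f2 : V2 -> W),
    [/\ injective f1, injective f2 &
        clos_refl_sym_trans _ (@elementary_collapse W)
          (cx_image f1 K1) (cx_image f2 K2)].

Definition order_complex (T : finType) (le : rel T) (P : {set T})
  : {set {set T}} :=
  [set c : {set T} | [&& c != set0, c \subset P &
     [forall x in c, forall y in c, le x y || le y x]]].

Definition Bd (V : finType) (X : {set {set V}}) : {set {set {set V}}} :=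
  order_complex (fun s t : {set V} => s \subset t) X.

Section Lat.
Context {d : Order.disp_t} {L : finTBLatticeType d}.

Definition is_atom (a : L) : bool :=
  (\bot < a) && [forall b : L, ~~ ((\bot < b) && (b < a))].

Definition atoms : {set L} := [set a | is_atom a].

Definition atomic : Prop :=
  forall x : L, exists S : {set L}, S \subset atoms /\ x = \join_(a in S) a.

Definition crosscut_complex : {set {set L}} :=
  [set s : {set L} | [&& s != set0, s \subset atoms &
                         \join_(a in s) a != \top]].

Definition proper_part : {set L} := [set x : L | (x != \bot) && (x != \top)].

Definition proper_part_complex : {set {set L}} :=
  order_complex (fun x y : L => x <= y) proper_part.

Definition atoms_below (x : L) : {set L} := [set a in atoms | a <= x].

End Lat.

(* Main.v *)
Require Import Defs.
From Stdlib Require Import Relations.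
From HB Require Import structures.
From mathcomp Require Import all_boot all_order zify.
Set Implicit Arguments. Unset Strict Implicit. Unset Printing Implicit Defensive.
Import Order.TTheory.

Lemma wlt1 a b x y N : (x < N)%N -> (a < b)%N -> (a*N + x < b*N + y)%N.
Proof. nia. Qed.
Lemma wlt2 a x y N : (x < y)%N -> (a*N + x < a*N + y)%N.
Proof. lia. Qed.

Section Matching.
Variable V : finType.
Implicit Types K A : {set {set V}}.

Lemma complexP K : reflect (forall s, s \in K -> s != set0 /\
   forall t, t != set0 -> t \subset s -> t \in K) (is_complex K).
Proof.
apply: (iffP forallP) => [H s sK | H s].
  have := H s; rewrite sK /= => /andP [-> /forallP H2]; split=> // t t0 ts.
  by have := H2 t; rewrite t0 ts.
apply/implyP=> sK; have [-> H2] := H s sK; apply/forallP=> t.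
by apply/implyP=> /andP [t0 ts]; apply: H2.
Qed.

Lemma collapse_pair K s t : is_complex K -> s \in K -> t \in K ->
  s \proper t -> #|t| = #|s|.+1 ->
  (forall u, u \in K -> s \proper u -> u = t) ->
  elementary_collapse K (K :\ s :\ t) /\ is_complex (K :\ s :\ t).
Proof.
move=> cK sK tK st ct fr; split; first by split=> //; exists s, t.
move/complexP: cK => cK; apply/complexP => x; rewrite !inE => /and3P [xt xs xK].
have [x0 H] := cK x xK; split=> // y y0 yx; rewrite !inE (H y y0 yx) andbT.
apply/andP; split.
  apply/eqP=> yt; subst y.
  have tx : t \proper x by rewrite properEneq eq_sym xt yx.
  have := fr x xK (proper_trans st tx) => E; by rewrite E eqxx in xt.
apply/eqP=> ys; subst y.
have sx : s \proper x by rewrite properEneq eq_sym xs yx.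
by have := fr x xK sx => E; rewrite E eqxx in xt.
Qed.

Lemma matching_collapse (w : {set V} -> nat) (v : {set V} -> V) :
 forall n K A, #|A| = n -> is_complex K -> A \subset K ->
 (forall s, s \in A -> v s \notin s) ->
 (forall s, s \in A -> v s |: s \in K) ->
 (forall s r, s \in A -> r \in A -> v r |: r != s) ->
 (forall s u, s \in A -> u \in K -> s \proper u ->
      u \in A \/ exists2 r, r \in A & u = v r |: r) ->
 (forall s r, s \in A -> r \in A -> s != r -> s \subset v r |: r -> w s < w r) ->
 collapses K (K :\: (A :|: [set v s |: s | s in A])).
Proof.
elim=> [|n IH] K A cA cK AK Hv HvK Ha Hb Hw.
  move/eqP: cA; rewrite cards_eq0 => /eqP ->; rewrite imset0 setU0 setD0.
  exact: rt_refl.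
have [s0 s0A] : {s0 | s0 \in A}.
  by case: (pickP (mem A)) => [x xA|/eq_card0]; [exists x | rewrite cA].
case: (arg_maxnP w s0A) => sg sgA sgmax.
set t := v sg |: sg.
have sgK : sg \in K by apply: (subsetP AK).
have tK : t \in K by apply: HvK.
have sgt : sg \proper t by rewrite /t properUr ?sub1set ?Hv.
have ct : #|t| = #|sg|.+1 by rewrite /t cardsU1 Hv.
have fr : forall u, u \in K -> sg \proper u -> u = t.
  move=> u uK su; case: (Hb sg u sgA uK su) => [uA | [r rA ur]].
    have : w sg < w u.
      apply: Hw => //; first by rewrite (proper_neq su).
      by apply: subset_trans (proper_sub su) _; apply: subsetUr.
    move=> h; have H : w u <= w sg := sgmax u uA; by rewrite leqNgt h in H.
  case: (eqVneq r sg) => [rs|rs]; first by rewrite ur rs.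
  have : w sg < w r.
    apply: Hw => //; first by rewrite eq_sym rs.
    by rewrite -ur; apply: proper_sub.
  move=> h; have H : w r <= w sg := sgmax r rA; by rewrite leqNgt h in H.
have [ec cK1] := collapse_pair cK sgK tK sgt ct fr.
set A1 := A :\ sg.
have tA1 : forall r, r \in A -> t != r by move=> r rA; apply: Ha.
have IH1 := IH (K :\ sg :\ t) A1.
have E : K :\: (A :|: [set v s |: s | s in A]) =
   (K :\ sg :\ t) :\: (A1 :|: [set v s |: s | s in A1]).
  rewrite -{1 2}(setD1K sgA) imsetU1 -/t.
  apply/setP => x; rewrite !inE.
  rewrite /A1; case: (x == sg); case: (x == t); case: (x \in A);
     case: (x \in [set v s |: s | s in A :\ sg]); by case: (x \in K).
rewrite E; apply: rt_trans (rt_step _ _ _ _ ec) _.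
apply: IH1 => //.
- have sgA2 : sg \in A := sgA. by move: cA; rewrite (cardsD1 sg A) sgA2 => -[].
- apply/subsetP=> r; rewrite !inE => /andP [rs rA].
  by rewrite eq_sym tA1 // rs (subsetP AK).
- by move=> s; rewrite inE => /andP [_ /Hv].
- move=> r; rewrite !inE => /andP [rs rA]; suff: v r |: r != t by move=> ->; rewrite HvK ?(Ha sg r).
  apply/eqP=> E2.
  have h1 : w sg < w r.
    apply: Hw => //; first by rewrite eq_sym rs.
    by rewrite E2 subsetUr.
  have h2 : w r < w sg.
    apply: Hw => //; by rewrite -/t -E2 subsetUr.
  by move: (ltn_trans h1 h2); rewrite ltnn.
- by move=> s r; rewrite !inE => /andP [_ sA] /andP [_ rA]; apply: Ha.
- move=> s u; rewrite !inE => /andP [_ sA] /and3P [ut us uK] su.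
  case: (Hb s u sA uK su) => [uA | [r rA ur]]; first by left; rewrite us.
  right; exists r => //; rewrite !inE rA andbT.
  by apply/eqP => rs; move: ut; rewrite ur rs eqxx.
- by move=> s r; rewrite !inE => /andP [_ sA] /andP [_ rA]; apply: Hw.
Qed.

End Matching.

Section LatBasics.
Context {d : Order.disp_t} {L : finTBLatticeType d}.
Local Open Scope order_scope.
Hypothesis atL : @atomic d L.

Lemma atom_gt0 (a : L) : a \in atoms -> \bot < a.
Proof. by rewrite inE => /andP []. Qed.

Lemma join_mono (A B : {set L}) : A \subset B ->
  \join_(a in A) a <= \join_(a in B) a.
Proof. by move=> AB; apply/joinsP => a aA; apply: joins_sup; apply: (subsetP AB). Qed.

Lemma join_atoms_below (x : L) : \join_(a in atoms_below x) a = x.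
Proof.
have [S [SA Ex]] := atL x.
apply/eqP; rewrite eq_le; apply/andP; split.
  by apply/joinsP => a; rewrite inE => /andP [_].
rewrite [X in X <= _]Ex; apply: join_mono; apply/subsetP => a aS.
rewrite inE (subsetP SA) //= Ex; exact: joins_sup.
Qed.

Lemma atoms_below_le (x y : L) :
  (atoms_below x \subset atoms_below y) = (x <= y).
Proof.
apply/idP/idP => [H | xy].
  by rewrite -(join_atoms_below x) -(join_atoms_below y) join_mono.
apply/subsetP => a; rewrite !inE => /andP [-> ax] /=; exact: le_trans ax xy.
Qed.

Lemma atoms_below_inj (x y : L) : atoms_below x = atoms_below y -> x = y.
Proof. by move=> E; rewrite -(join_atoms_below x) E join_atoms_below. Qed.

Lemma join_ne_bot (S : {set L}) : S \subset atoms -> S != set0 ->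
  \join_(a in S) a != \bot.
Proof.
move=> SA /set0Pn [a aS]; rewrite -lt0x.
apply: lt_le_trans (atom_gt0 (subsetP SA a aS)) _; exact: joins_sup.
Qed.

Lemma exists_atom (x : L) : x != \bot -> exists2 a, a \in atoms & a <= x.
Proof.
have [S [SA Ex]] := atL x => xb.
case: (set_0Vmem S) => [S0 | [a aS]].
  by move: xb; rewrite Ex S0 big_set0 eqxx.
exists a; first exact: (subsetP SA).
rewrite Ex; exact: joins_sup.
Qed.

Lemma atoms_below_ne0 (x : L) : x != \bot -> atoms_below x != set0.
Proof.
move=> /exists_atom [a aA ax]; apply/set0Pn; exists a; by rewrite inE aA.
Qed.

Definition chainb (c : {set L}) :=
  [forall x in c, forall y in c, (x <= y) || (y <= x)].

Lemma chainbP (c : {set L}) : reflect {in c &, forall x y, (x <= y) || (y <= x)} (chainb c).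
Proof.
apply: (iffP forallP) => [H x y xc yc | H x].
  by have := H x; rewrite xc /= => /forallP /(_ y); rewrite yc.
by apply/implyP=> xc; apply/forallP=> y; apply/implyP=> yc; apply: H.
Qed.

Lemma chain_min (c : {set L}) : c != set0 -> chainb c ->
  exists2 m, m \in c & forall y, y \in c -> m <= y.
Proof.
move=> /set0Pn [x0 x0c] /chainbP ch.
pose h (y : L) := #|[set z : L | z < y]|.
case: (arg_minnP h x0c) => m mc mmin.
exists m => // y yc.
case/orP: (ch m y mc yc) => // ym.
case: (eqVneq y m) => [-> // | ne].
have ltym : y < m by rewrite lt_neqAle ne.
have : (h y < h m)%N.
  apply: proper_card; rewrite properE; apply/andP; split.
    by apply/subsetP => z; rewrite !inE => zy; apply: lt_trans zy ltym.
  by apply/subsetP => /(_ y); rewrite !inE ltym ltxx => /(_ isT).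
move=> H; have H2 : (h m <= h y)%N := mmin y yc; by rewrite leqNgt H in H2.
Qed.

End LatBasics.

Section Cylinder.
Context {d : Order.disp_t} {L : finTBLatticeType d}.
Local Open Scope order_scope.
Hypothesis atL : @atomic d L.

Definition W := (L + L)%type.
Implicit Types s t : {set W}.
Definition tau (s : {set W}) : {set L} := [set a | inl a \in s].
Definition chn (s : {set W}) : {set L} := [set x | inr x \in s].
Definition belowb (s : {set W}) :=
  [forall a in tau s, forall y in chn s, a <= y].
Definition cylb (s : {set W}) : bool :=
  [&& s != set0, tau s \subset atoms, \join_(a in tau s) a != \top,
      chn s \subset proper_part & chainb (chn s) && belowb s].
Definition Cyl : {set {set W}} := [set s | cylb s].

Lemma belowbP s : reflect (forall a y, a \in tau s -> y \in chn s -> a <= y) (belowb s).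
Proof.
apply: (iffP forallP) => [H a y aT yC | H a].
  by have := H a; rewrite aT /= => /forallP /(_ y); rewrite yC.
by apply/implyP=> aT; apply/forallP=> y; apply/implyP=> yC; apply: H.
Qed.

Lemma tau_sub s t : t \subset s -> tau t \subset tau s.
Proof. by move=> ts; apply/subsetP=> a; rewrite !inE; apply: (subsetP ts). Qed.
Lemma chn_sub s t : t \subset s -> chn t \subset chn s.
Proof. by move=> ts; apply/subsetP=> a; rewrite !inE; apply: (subsetP ts). Qed.

Lemma chn_U1l a s : chn (inl a |: s) = chn s.
Proof. by apply/setP=> x; rewrite !inE. Qed.
Lemma chn_D1l a s : chn (s :\ inl a) = chn s.
Proof. by apply/setP=> x; rewrite !inE. Qed.
Lemma tau_U1l a s : tau (inl a |: s) = a |: tau s.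
Proof. by apply/setP=> x; rewrite !inE. Qed.
Lemma tau_U1r a s : tau (inr a |: s) = tau s.
Proof. by apply/setP=> x; rewrite !inE. Qed.
Lemma tau_D1r a s : tau (s :\ inr a) = tau s.
Proof. by apply/setP=> x; rewrite !inE. Qed.
Lemma chn_U1r a s : chn (inr a |: s) = a |: chn s.
Proof. by apply/setP=> x; rewrite !inE. Qed.

Lemma chainb_sub (c c' : {set L}) : c' \subset c -> chainb c -> chainb c'.
Proof.
move=> cc /chainbP H; apply/chainbP => x y xc yc; apply: H; exact: (subsetP cc).
Qed.

Lemma cyl_sub s t : s \in Cyl -> t != set0 -> t \subset s -> t \in Cyl.
Proof.
rewrite !inE => /and5P [s0 tA jT cP /andP [ch bl]] t0 ts.
have tt := tau_sub ts; have cc := chn_sub ts.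
apply/and5P; split => //; last (apply/andP; split).
- exact: subset_trans tt tA.
- apply: contra jT => /eqP jt; rewrite -le1x -jt; exact: join_mono.
- exact: subset_trans cc cP.
- exact: chainb_sub ch.
- apply/belowbP => a y aT yC; move/belowbP: bl; apply.
  exact: (subsetP tt). exact: (subsetP cc).
Qed.

Lemma cyl_complex : is_complex Cyl.
Proof.
apply/complexP => s sC; split; first by move: sC; rewrite inE => /and5P [].
by move=> t t0 ts; apply: cyl_sub sC t0 ts.
Qed.

Lemma imset_sub_neq (T : finType) (A B : {set T}) : A \subset B -> A != B -> #|A| < #|B|.
Proof. by move=> AB ne; apply: proper_card; rewrite properEneq ne. Qed.


Definition aG s : L := odflt \bot [pick a in atoms | [forall y in chn s, a <= y]].
Definition vG s : W := inl (aG s).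

Lemma aG_spec s : s \in Cyl -> chn s != set0 ->
  aG s \in atoms /\ forall y, y \in chn s -> aG s <= y.
Proof.
rewrite inE => /and5P [_ _ _ cP /andP [ch _]] c0.
have [m mc mmin] := chain_min c0 ch.
have mb : m != \bot by move: (subsetP cP m mc); rewrite inE => /andP [].
have [a aA am] := exists_atom atL mb.
rewrite /aG; case: pickP => [b /andP [bA /forallP H] | /(_ a)] /=.
  by split => // y yc; have := H y; rewrite yc.
rewrite aA /=; move/negbT/negP; case; apply/forallP => y; apply/implyP => yc.
exact: le_trans am (mmin y yc).
Qed.

Lemma chn_vG s : chn (vG s |: s) = chn s. Proof. by rewrite /vG chn_U1l. Qed.
Lemma vG_vG s : vG (vG s |: s) = vG s. Proof. by rewrite /vG /aG chn_vG. Qed.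

Definition AG : {set {set W}} := [set s in Cyl | (chn s != set0) && (vG s \notin s)].

Lemma vGK s : s \in Cyl -> chn s != set0 -> vG s |: s \in Cyl.
Proof.
move=> sC c0; have [aA ab] := aG_spec sC c0.
move: sC; rewrite !inE => /and5P [s0 tA jT cP /andP [ch bl]].
have [m mc _] := chain_min c0 ch.
have mT : m != \top by move: (subsetP cP m mc); rewrite inE => /andP [].
rewrite /cylb /vG chn_U1l tau_U1l; apply/and5P; split => //.
- by apply/set0Pn; exists (inl (aG s)); rewrite !inE eqxx.
- by rewrite subUset sub1set aA.
- apply: contra mT => /eqP jt; rewrite -le1x -jt; apply/joinsP => a.
  rewrite in_setU1 => /orP [/eqP -> | aT]; first exact: ab.
  by move/belowbP: bl; apply.
- rewrite ch /=; apply/belowbP => a y; rewrite tau_U1l chn_U1l in_setU1 => /orP [/eqP -> | aT] yc.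
    exact: ab.
  by move/belowbP: bl; apply.
Qed.

Lemma inl_tau_chn0 x : chn x = set0 -> x = inl @: tau x.
Proof.
move=> c0; apply/setP => [[a|a]]; first by rewrite mem_imset ?inE //; exact: inl_inj.
apply/idP/idP => [H | /imsetP [? _] //].
by move: c0 => /setP /(_ a); rewrite !inE H.
Qed.

Lemma tau_inl (t : {set L}) : tau (inl @: t) = t.
Proof. by apply/setP=> a; rewrite inE mem_imset //; exact: inl_inj. Qed.
Lemma chn_inl (t : {set L}) : chn (inl @: t) = set0.
Proof. by apply/setP=> a; rewrite !inE; apply/negP => /imsetP [? _]. Qed.

Lemma imgG x : (x \in cx_image inl (@crosscut_complex d L)) =
   (x \in Cyl) && (chn x == set0).
Proof.
apply/idP/idP.
  move=> /imsetP [t]; rewrite inE => /and3P [t0 tA jT] ->.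
  rewrite chn_inl eqxx andbT inE /cylb tau_inl chn_inl tA jT sub0set /=.
  apply/and3P; split.
  - by rewrite -(imset0 inl) (inj_eq (imset_inj inl_inj)).
  - by apply/chainbP => ?; rewrite inE.
  - by apply/belowbP => a y _; rewrite chn_inl inE.
move=> /andP [xC /eqP c0]; apply/imsetP; exists (tau x); last exact: inl_tau_chn0.
move: xC; rewrite !inE /cylb => /and5P [x0 tA jT _ _]; rewrite tA jT andbT.
rewrite andbT; apply: contraNneq x0 => t0; by rewrite (inl_tau_chn0 c0) t0 imset0.
Qed.

Lemma memAGB x : x \in Cyl ->
  (x \in AG) || (x \in [set vG s |: s | s in AG]) = (chn x != set0).
Proof.
move=> xC; case: (eqVneq (chn x) set0) => [c0 | c0] /=.
  apply/negbTE; rewrite negb_or; apply/andP; split; first by rewrite inE c0 eqxx andbF.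
  apply/negP => /imsetP [r]; rewrite inE => /and3P [_ cr _] xr.
  by move: c0; rewrite xr chn_vG => /eqP; rewrite (negbTE cr).
case: (boolP (vG x \in x)) => vx; last by rewrite inE xC c0 vx.
apply/orP; right; apply/imsetP; exists (x :\ vG x); last by rewrite /vG /aG chn_D1l setD1K.
have vE : vG (x :\ vG x) = vG x by rewrite /vG /aG chn_D1l.
rewrite inE vE !in_setD1 eqxx /= /vG chn_D1l c0 andbT.
rewrite andbT; apply: cyl_sub xC _ (subD1set _ _).
apply/set0Pn; have /set0Pn [y yc] := c0; exists (inr y).
by move: yc; rewrite !inE.
Qed.

Lemma collapse_Gamma : collapses Cyl (cx_image inl (@crosscut_complex d L)).
Proof.
set N := #|{: W}|.+1.
have E : Cyl :\: (AG :|: [set vG s |: s | s in AG]) = cx_image inl crosscut_complex.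
  apply/setP => x; rewrite in_setD imgG.
  case: (boolP (x \in Cyl)) => xC; last by rewrite !andbF.
  by rewrite in_setU memAGB // andbT andTb negbK.
rewrite -E; apply: (@matching_collapse _ (fun s => #|chn s| * N + #|s|)%N vG _ _ _ erefl).
- exact: cyl_complex.
- by apply/subsetP => s; rewrite inE => /andP [].
- by move=> s; rewrite inE => /and3P [].
- by move=> s; rewrite inE => /and3P [sC c0 _]; apply: vGK.
- move=> s r; rewrite !inE => /and3P [_ _ vs] _; apply: contra vs => /eqP <-.
  by rewrite vG_vG setU11.
- move=> s u; rewrite inE => /and3P [sC c0 vs] uC su.
  have cu : chn u != set0.
    apply: contra c0 => /eqP cu; rewrite -subset0 -cu; apply: chn_sub (proper_sub su).
  case: (boolP (vG u \in u)) => vu; last by left; rewrite inE uC cu vu.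
  right; exists (u :\ vG u); last by rewrite /vG /aG chn_D1l -/(aG u) setD1K.
  have vE : vG (u :\ vG u) = vG u by rewrite /vG /aG chn_D1l.
  rewrite inE vE !in_setD1 eqxx /= /vG chn_D1l cu /=.
  rewrite andbT; apply: cyl_sub uC _ (subD1set _ _).
  apply/set0Pn; have /set0Pn [y yc] := cu; exists (inr y).
  by move: yc; rewrite !inE.
- move=> s r; rewrite !inE => /and3P [sC cs vs] /and3P [rC cr vr] sr srv.
  have hc := chn_sub srv; rewrite chn_vG in hc.
  have sN : (#|s| < N)%N by rewrite /N ltnS max_card.
  have rN : (#|r| < N)%N by rewrite /N ltnS max_card.
  case: (eqVneq (chn s) (chn r)) => ce.
    have vsr : vG s = vG r by rewrite /vG /aG ce.
    have sr2 : s \subset r.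
      apply/subsetP => x xs; move: (subsetP srv x xs); rewrite in_setU1.
      case: eqP => [xv _ | //]; move: vs; by rewrite vsr -xv xs.
    have : (#|s| < #|r|)%N by apply: proper_card; rewrite properEneq sr sr2.
    rewrite ce; nia.
  have : (#|chn s| < #|chn r|)%N by apply: proper_card; rewrite properEneq ce hc.
  nia.
Qed.

Definition jn s : L := \join_(a in tau s) a.
Definition vD s : W := inr (jn s).

Lemma tau_vD s : tau (vD s |: s) = tau s. Proof. by rewrite /vD tau_U1r. Qed.
Lemma vD_vD s : vD (vD s |: s) = vD s. Proof. by rewrite /vD /jn tau_vD. Qed.

Definition AD : {set {set W}} := [set s in Cyl | (tau s != set0) && (vD s \notin s)].

Lemma vDK s : s \in Cyl -> tau s != set0 -> vD s |: s \in Cyl.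
Proof.
rewrite !inE /cylb => /and5P [s0 tA jT cP /andP [ch bl]] t0.
have jy : forall y, y \in chn s -> jn s <= y.
  move=> y yc; apply/joinsP => a aT; by move/belowbP: bl; apply.
rewrite /vD chn_U1r tau_U1r; apply/and5P; split => //.
- by apply/set0Pn; exists (inr (jn s)); rewrite !inE eqxx.
- rewrite subUset cP andbT sub1set inE jT andbT; exact: join_ne_bot.
- apply/andP; split.
    apply/chainbP => x y; rewrite !in_setU1.
    move=> /orP [/eqP -> | xc] /orP [/eqP -> | yc].
    - by rewrite lexx.
    - by rewrite jy.
    - by rewrite jy ?orbT.
    by move/chainbP: ch; apply.
  apply/belowbP => a y; rewrite tau_U1r chn_U1r in_setU1 => aT => /orP [/eqP -> | yc].
    by apply: joins_sup.
  by move/belowbP: bl; apply.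
Qed.

Lemma tau_inr (t : {set L}) : tau (inr @: t) = set0.
Proof. by apply/setP=> a; rewrite !inE; apply/negP => /imsetP [? _]. Qed.
Lemma chn_inr (t : {set L}) : chn (inr @: t) = t.
Proof. by apply/setP=> a; rewrite inE mem_imset //; exact: inr_inj. Qed.

Lemma inr_chn_tau0 x : tau x = set0 -> x = inr @: chn x.
Proof.
move=> c0; apply/setP => [[a|a]]; last by rewrite mem_imset ?inE //; exact: inr_inj.
apply/idP/idP => [H | /imsetP [? _] //].
by move: c0 => /setP /(_ a); rewrite !inE H.
Qed.

Lemma imgD x : (x \in cx_image inr (@proper_part_complex d L)) =
   (x \in Cyl) && (tau x == set0).
Proof.
apply/idP/idP.
  move=> /imsetP [t]; rewrite inE => /and3P [t0 tP ch] ->.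
  rewrite tau_inr eqxx andbT inE /cylb tau_inr chn_inr tP sub0set /=.
  rewrite big_set0; apply/and4P; split.
  - by rewrite -(imset0 inr) (inj_eq (imset_inj inr_inj)).
  - have /set0Pn [y yt] := t0; move: (subsetP tP y yt); rewrite inE.
    case/andP => yb _; apply/eqP => E.
    by move: (lex1 y); rewrite -E lex0 (negbTE yb).
  - exact: ch.
  - by apply/belowbP => a y; rewrite tau_inr inE.
move=> /andP [xC /eqP c0]; apply/imsetP; exists (chn x); last exact: inr_chn_tau0.
move: xC; rewrite !inE /cylb => /and5P [x0 _ _ cP /andP [ch _]].
rewrite cP /=; apply/andP; split; last exact: ch. apply: contraNneq x0 => t0.
by rewrite (inr_chn_tau0 c0) t0 imset0.
Qed.

Lemma memADB x : x \in Cyl ->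
  (x \in AD) || (x \in [set vD s |: s | s in AD]) = (tau x != set0).
Proof.
move=> xC; case: (eqVneq (tau x) set0) => [c0 | c0] /=.
  apply/negbTE; rewrite negb_or; apply/andP; split; first by rewrite inE c0 eqxx andbF.
  apply/negP => /imsetP [r]; rewrite inE => /and3P [_ cr _] xr.
  by move: c0; rewrite xr tau_vD => /eqP; rewrite (negbTE cr).
case: (boolP (vD x \in x)) => vx; last by rewrite inE xC c0 vx.
apply/orP; right; apply/imsetP; exists (x :\ vD x); last by rewrite /vD /jn tau_D1r setD1K.
have vE : vD (x :\ vD x) = vD x by rewrite /vD /jn tau_D1r.
rewrite inE vE !in_setD1 eqxx /= /vD tau_D1r c0 andbT.
rewrite andbT; apply: cyl_sub xC _ (subD1set _ _).
apply/set0Pn; have /set0Pn [y yc] := c0; exists (inl y).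
by move: yc; rewrite !inE.
Qed.

Lemma collapse_Delta : collapses Cyl (cx_image inr (@proper_part_complex d L)).
Proof.
set N := #|{: W}|.+1.
have E : Cyl :\: (AD :|: [set vD s |: s | s in AD]) = cx_image inr proper_part_complex.
  apply/setP => x; rewrite in_setD imgD.
  case: (boolP (x \in Cyl)) => xC; last by rewrite !andbF.
  by rewrite in_setU memADB // andbT andTb negbK.
rewrite -E; apply: (@matching_collapse _ (fun s => #|tau s| * N + #|s|)%N vD _ _ _ erefl).
- exact: cyl_complex.
- by apply/subsetP => s; rewrite inE => /andP [].
- by move=> s; rewrite inE => /and3P [].
- by move=> s; rewrite inE => /and3P [sC c0 _]; apply: vDK.
- move=> s r; rewrite !inE => /and3P [_ _ vs] _; apply: contra vs => /eqP <-.
  by rewrite vD_vD setU11.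
- move=> s u; rewrite inE => /and3P [sC c0 vs] uC su.
  have cu : tau u != set0.
    apply: contra c0 => /eqP cu; rewrite -subset0 -cu; apply: tau_sub (proper_sub su).
  case: (boolP (vD u \in u)) => vu; last by left; rewrite inE uC cu vu.
  right; exists (u :\ vD u); last by rewrite /vD /jn tau_D1r -/(jn u) setD1K.
  have vE : vD (u :\ vD u) = vD u by rewrite /vD /jn tau_D1r.
  rewrite inE vE !in_setD1 eqxx /= /vD tau_D1r cu /=.
  rewrite andbT; apply: cyl_sub uC _ (subD1set _ _).
  apply/set0Pn; have /set0Pn [y yc] := cu; exists (inl y).
  by move: yc; rewrite !inE.
- move=> s r; rewrite !inE => /and3P [sC cs vs] /and3P [rC cr vr] sr srv.
  have hc := tau_sub srv; rewrite tau_vD in hc.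
  have sN : (#|s| < N)%N by rewrite /N ltnS max_card.
  have rN : (#|r| < N)%N by rewrite /N ltnS max_card.
  case: (eqVneq (tau s) (tau r)) => ce.
    have vsr : vD s = vD r by rewrite /vD /jn ce.
    have sr2 : s \subset r.
      apply/subsetP => x xs; move: (subsetP srv x xs); rewrite in_setU1.
      case: eqP => [xv _ | //]; move: vs; by rewrite vsr -xv xs.
    have : (#|s| < #|r|)%N by apply: proper_card; rewrite properEneq sr sr2.
    rewrite ce; nia.
  have : (#|tau s| < #|tau r|)%N by apply: proper_card; rewrite properEneq ce hc.
  nia.
Qed.

End Cylinder.

Section Closure.
Context {d : Order.disp_t} {L : finTBLatticeType d}.
Local Open Scope order_scope.
Hypothesis atL : @atomic d L.
Implicit Types (s t x y : {set L}) (c u r : {set {set L}}).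

Notation G := (@crosscut_complex d L).

Lemma GP s : (s \in G) = [&& s != set0, s \subset atoms & \join_(a in s) a != \top].
Proof. by rewrite inE. Qed.

Lemma BdP c : reflect [/\ c != set0, c \subset G &
   {in c &, forall x y, (x \subset y) || (y \subset x)}] (c \in Bd G).
Proof.
rewrite inE; apply: (iffP and3P) => [[c0 cG /forallP H] | [c0 cG H]]; split => //.
  move=> x y xc yc; have := H x; rewrite xc /= => /forallP /(_ y); by rewrite yc.
apply/forallP => x; apply/implyP => xc; apply/forallP => y; apply/implyP => yc.
exact: H.
Qed.

Lemma Bd_sub c u : c \in Bd G -> u != set0 -> u \subset c -> u \in Bd G.
Proof.
move=> /BdP [_ cG ch] u0 uc; apply/BdP; split => //; first exact: subset_trans uc cG.
move=> x y xu yu; apply: ch; exact: (subsetP uc).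
Qed.

Lemma Bd_complex : is_complex (Bd G).
Proof.
apply/complexP => c cB; split; first by case/BdP: cB.
by move=> u u0 uc; apply: Bd_sub cB u0 uc.
Qed.

Definition phi s : {set L} := atoms_below (\join_(a in s) a).
Definition closed s := phi s == s.

Lemma sub_phi s : s \subset atoms -> s \subset phi s.
Proof.
move=> sA; apply/subsetP => a aS; rewrite inE (subsetP sA a aS) /=; exact: joins_sup.
Qed.

Lemma phi_mono s t : s \subset t -> phi s \subset phi t.
Proof. by move=> st; rewrite /phi atoms_below_le // join_mono. Qed.

Lemma phi_closed s : closed (phi s).
Proof. by rewrite /closed /phi join_atoms_below. Qed.

Lemma phiG s : s \in G -> phi s \in G.
Proof.
rewrite !GP => /and3P [s0 sA jT].
rewrite /phi join_atoms_below // jT andbT; apply/andP; split.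
  apply: contraNneq s0 => E; rewrite -subset0 -E; exact: sub_phi.
by apply/subsetP => a; rewrite inE => /andP [].
Qed.

Lemma phi_le_closed s y : closed y -> s \subset y -> phi s \subset y.
Proof. by move=> /eqP cy sy; rewrite -cy; apply: phi_mono. Qed.

Definition Pmax c x := [&& x \in c, ~~ closed x & [forall y in c, ~~ closed y ==> (y \subset x)]].
Definition xc c : {set L} := odflt set0 [pick x | Pmax c x].
Definition hasnc c := [exists x in c, ~~ closed x].

Lemma PmaxP c x : reflect [/\ x \in c, ~~ closed x &
   forall y, y \in c -> ~~ closed y -> y \subset x] (Pmax c x).
Proof.
apply: (iffP and3P) => [[xc nx /forallP H] | [xc nx H]]; split => //.
  by move=> y yc ny; have := H y; rewrite yc ny.
by apply/forallP => y; apply/implyP => yc; apply/implyP; apply: H.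
Qed.

Lemma Pmax_exists c : c \in Bd G -> hasnc c -> exists x, Pmax c x.
Proof.
move=> /BdP [_ _ ch] /existsP [x0 /andP [x0c nx0]].
pose P := fun x => (x \in c) && ~~ closed x.
have P0 : P x0 by rewrite /P x0c.
case: (arg_maxnP (fun x => #|x|) P0) => m /andP [mc nm] mmax.
exists m; apply/PmaxP; split => // y yc ny.
case/orP: (ch y m yc mc) => // my.
have H : (#|y| <= #|m|)%N by apply: mmax; rewrite /P yc ny.
have : m == y by rewrite eqEcard my H.
by move/eqP ->.
Qed.

Lemma xc_uniq c x : Pmax c x -> xc c = x.
Proof.
move=> Px; rewrite /xc; case: pickP => [y Py | /(_ x)]; last by rewrite Px.
move/PmaxP: Px => [xc nx Hx]; move/PmaxP: Py => [yc ny Hy].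
by apply/eqP; rewrite eqEsubset Hx // Hy.
Qed.

Lemma xc_spec c : c \in Bd G -> hasnc c -> Pmax c (xc c).
Proof. by move=> cB hc; have [x Px] := Pmax_exists cB hc; rewrite (xc_uniq Px). Qed.

Definition v1 c := phi (xc c).
Definition A1 : {set {set {set L}}} := [set c in Bd G | hasnc c && (v1 c \notin c)].

Lemma mem_A1 c : (c \in A1) = [&& c \in Bd G, hasnc c & v1 c \notin c].
Proof. by rewrite /A1 in_set. Qed.

Lemma v1_closed c : closed (v1 c). Proof. exact: phi_closed. Qed.

Lemma nc_neq x y : ~~ closed x -> closed y -> x != y.
Proof. by move=> nx cy; apply: contraNneq nx => ->. Qed.

Lemma hasncP c : reflect (exists2 x, x \in c & ~~ closed x) (hasnc c).
Proof. by apply: (iffP existsP) => [[x /andP [? ?]] | [x ? ?]]; exists x => //; apply/andP. Qed.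

Lemma v1K c : c \in Bd G -> hasnc c -> v1 c |: c \in Bd G.
Proof.
move=> cB hc; have /PmaxP [xin nx xmax] := xc_spec cB hc.
move/BdP: (cB) => [c0 cG ch].
have xG : xc c \in G by apply: (subsetP cG).
have xA : xc c \subset atoms by move: xG; rewrite GP => /and3P [].
apply/BdP; split.
- by apply/set0Pn; exists (v1 c); rewrite setU11.
- by rewrite subUset sub1set phiG.
- have key : forall y, y \in c -> (y \subset v1 c) || (v1 c \subset y).
    move=> y yc; case: (boolP (closed y)) => cy.
      case/orP: (ch y (xc c) yc xin) => H.
        by rewrite (subset_trans H (sub_phi xA)).
      by rewrite orbC phi_le_closed.
    by rewrite (subset_trans (xmax y yc cy) (sub_phi xA)).
  move=> x y; rewrite !in_setU1 => /orP [/eqP -> | xc0] /orP [/eqP -> | yc0].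
  + by rewrite subxx.
  + by rewrite orbC key.
  + by rewrite key.
  + exact: ch.
Qed.

Lemma xc_U1 c : c \in Bd G -> hasnc c -> xc (v1 c |: c) = xc c.
Proof.
move=> cB hc; have /PmaxP [xin nx xmax] := xc_spec cB hc.
apply: xc_uniq; apply/PmaxP; split => //; first by rewrite in_setU1 xin orbT.
move=> y; rewrite in_setU1 => /orP [/eqP -> | yc] ny; last exact: xmax.
by move: ny; rewrite v1_closed.
Qed.

Lemma hasnc_U1 c z : hasnc c -> hasnc (z |: c).
Proof. by move=> /hasncP [x xc nx]; apply/hasncP; exists x; rewrite ?in_setU1 ?xc ?orbT. Qed.

Lemma v1_U1 c : c \in Bd G -> hasnc c -> v1 (v1 c |: c) = v1 c.
Proof. by move=> cB hc; rewrite /v1 xc_U1. Qed.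

Lemma xc_D1 c : c \in Bd G -> hasnc c ->
  [/\ xc (c :\ v1 c) = xc c, hasnc (c :\ v1 c) & c :\ v1 c \in Bd G].
Proof.
move=> cB hc; have /PmaxP [xin nx xmax] := xc_spec cB hc.
have xin2 : xc c \in c :\ v1 c by rewrite in_setD1 xin andbT nc_neq ?v1_closed.
split.
- apply: xc_uniq; apply/PmaxP; split => // y; rewrite in_setD1 => /andP [_ yc].
  exact: xmax.
- by apply/hasncP; exists (xc c).
- apply: Bd_sub cB _ (subD1set _ _); by apply/set0Pn; exists (xc c).
Qed.

Lemma atoms_below_G (x : L) : x \in proper_part -> atoms_below x \in G.
Proof.
rewrite inE => /andP [xb xT]; rewrite GP join_atoms_below // xT andbT.
rewrite atoms_below_ne0 //=; by apply/subsetP => a; rewrite inE => /andP [].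
Qed.

Lemma atoms_below_closed (x : L) : closed (atoms_below x).
Proof. by rewrite /closed /phi join_atoms_below. Qed.

Lemma img1 c : (c \in cx_image (@atoms_below d L) (@proper_part_complex d L)) =
   (c \in Bd G) && ~~ hasnc c.
Proof.
apply/idP/idP.
  move=> /imsetP [t]; rewrite inE => /and3P [t0 tP /chainbP ch] ->.
  apply/andP; split; last first.
    by apply/hasncP => [[x /imsetP [y _ ->]]]; rewrite atoms_below_closed.
  apply/BdP; split.
  - by apply: contraNneq t0 => E; rewrite -(imset_eq0 (@atoms_below d L)) E.
  - by apply/subsetP => x /imsetP [y yt ->]; apply: atoms_below_G; apply: (subsetP tP).
  - move=> x y /imsetP [x' x't ->] /imsetP [y' y't ->].
    by rewrite !atoms_below_le //; apply: ch.
move=> /andP [/BdP [c0 cG ch] nh].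
have cl : forall s, s \in c -> atoms_below (\join_(a in s) a) = s.
  move=> s sc; apply/eqP; case: (boolP (closed s)) => // ns.
  by move: nh; case/hasncP; exists s.
apply/imsetP; exists [set \join_(a in s) a | s : {set L} in c].
  rewrite inE; apply/and3P; split.
  - by rewrite imset_eq0.
  - apply/subsetP => j /imsetP [s sc ->]; move: (subsetP cG s sc); rewrite GP.
    by move=> /and3P [s0 sA jT]; rewrite inE jT andbT join_ne_bot.
  - apply/chainbP => j k /imsetP [s sc ->] /imsetP [t tc ->].
    by case/orP: (ch s t sc tc) => H; rewrite (join_mono H) ?orbT.
rewrite -imset_comp; apply/esym; rewrite -[X in _ = X]imset_id.
by apply: eq_in_imset => s sc; rewrite /= cl.
Qed.

Lemma memAB1 c : c \in Bd G ->
  (c \in A1) || (c \in [set v1 s |: s | s in A1]) = hasnc c.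
Proof.
move=> cB; case: (boolP (hasnc c)) => hc /=.
  case: (boolP (v1 c \in c)) => vc; last by rewrite inE cB hc vc.
  have [E1 h1 B1] := xc_D1 cB hc.
  apply/orP; right; apply/imsetP; exists (c :\ v1 c); last by rewrite /v1 E1 setD1K.
  by rewrite inE B1 h1 /v1 E1 !in_setD1 eqxx.
apply/negbTE; rewrite negb_or; apply/andP; split; first by rewrite inE (negbTE hc) andbF.
apply/negP => /imsetP [r]; rewrite inE => /and3P [_ hr _] cr.
by move: hc; rewrite cr hasnc_U1.
Qed.

Lemma collapse_Bd : collapses (Bd G) (cx_image (@atoms_below d L) (@proper_part_complex d L)).
Proof.
set N := #|{: {set L}}|.+1.
have E : Bd G :\: (A1 :|: [set v1 s |: s | s in A1]) =
         cx_image (@atoms_below d L) (@proper_part_complex d L).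
  apply/setP => x; rewrite in_setD img1.
  case: (boolP (x \in Bd G)) => xC; last by rewrite !andbF.
  by rewrite in_setU memAB1 // andbT.
rewrite -E; apply: (@matching_collapse _ (fun c => #|xc c| * N + #|c|)%N v1 _ _ _ erefl).
- exact: Bd_complex.
- by apply/subsetP => s; rewrite inE => /andP [].
- by move=> s; rewrite inE => /and3P [].
- by move=> s; rewrite inE => /and3P [sC c0 _]; apply: v1K.
- move=> s r; rewrite !mem_A1 => /and3P [_ _ vs] /and3P [rB hr _].
  apply: contra vs => /eqP <-; rewrite v1_U1 //; exact: setU11.
- move=> s u; rewrite inE => /and3P [sC hs vs] uC su.
  have hu : hasnc u.
    move/hasncP: hs => [x xs nx]; apply/hasncP; exists x => //.
    exact: (subsetP (proper_sub su)).
  case: (boolP (v1 u \in u)) => vu; last by left; rewrite inE uC hu vu.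
  have [E1 h1 B1] := xc_D1 uC hu.
  right; exists (u :\ v1 u); last by rewrite /v1 E1 setD1K.
  by rewrite inE B1 h1 /v1 E1 !in_setD1 eqxx.
- move=> s r; rewrite !mem_A1 => /and3P [sC hs vs] /and3P [rC hr vr] sr srv.
  have sN : (#|s| < N)%N by rewrite /N ltnS max_card.
  have rN : (#|r| < N)%N by rewrite /N ltnS max_card.
  have /PmaxP [xsin nxs _] := xc_spec sC hs.
  have /PmaxP [xrin nxr xrmax] := xc_spec rC hr.
  have xsr : xc s \in r.
    move: (subsetP srv _ xsin); rewrite in_setU1 => /orP [/eqP E2 | //].
    by move: nxs; rewrite E2 v1_closed.
  have hsub := xrmax _ xsr nxs.
  case: (eqVneq (xc s) (xc r)) => ce.
    have vsr : v1 s = v1 r by rewrite /v1 ce.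
    have sr2 : s \subset r.
      apply/subsetP => x xs; move: (subsetP srv x xs); rewrite in_setU1.
      case: eqP => [xv _ | //]; move: vs; by rewrite vsr -xv xs.
    have : (#|s| < #|r|)%N by apply: proper_card; rewrite properEneq sr sr2.
    by rewrite ce; apply: wlt2.
  have : (#|xc s| < #|xc r|)%N by apply: proper_card; rewrite properEneq ce hsub.
  exact: wlt1.
Qed.

End Closure.

Unset Implicit Arguments.
Theorem mainTheorem2 (d : Order.disp_t) (L : finTBLatticeType d) :
  @atomic d L ->
  collapses (Bd (@crosscut_complex d L))
            (cx_image (@atoms_below d L) (@proper_part_complex d L)) /\
  same_simple_homotopy_type (@crosscut_complex d L) (@proper_part_complex d L).
Proof.
move=> atL; split; first exact: collapse_Bd.
exists (L + L)%type, inl, inr; split; [exact: inl_inj | exact: inr_inj |].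
apply: rst_trans.
  apply: rst_sym; apply: clos_rt_clos_rst; exact: (collapse_Gamma atL).
apply: clos_rt_clos_rst; exact: collapse_Delta.
Qed.
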